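(* Let $T$ be a tree with positive edge weights rooted at the homebase $r$, in which no vertex other than $r$ has exactly one child, and let $q\ge 0$. Define labels $\Lambda_v=(\Lambda_v.k,\Lambda_v.u_l,\Lambda_v.u_c)$ for all $v\in V(T)$ recursively from the leaves up (procedure SetLabeling): for a leaf $v$, $\Lambda_v=(1,v,\mathrm{null})$; for a non-leaf $v$, with $d_r=d(r,v)+q$, $$\Lambda_v.k=\max\Big\{1,\ \sum_{u\in c(v)}\big(\Lambda_u.k-\mathbb{1}[\Lambda_u.k=1 \text{ and } d(v,\Lambda_u.u_l)\le d_r]\big)\Big\},$$ $\Lambda_v.u_c$ is a child $u$ of $v$ maximizing $d(v,\Lambda_u.u_l)$, and $\Lambda_v.u_l=\Lambda_{\Lambda_v.u_c}.u_l$. Then for every $v\in V(T)$, every cost-optimal strategy exploring $T$ uses at least $\Lambda_v.k$ agents to explore $T_v$ (i.e., at least $\Lambda_v.k$ agents visit vertices of $T_v$).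
   Context: Exploration model: given a connected graph with positive edge weights, a homebase vertex, and invoking cost $q\ge 0$, a strategy is a sequence of moves, each either invoking a new agent (appearing at the homebase) or an agent traversing an edge incident to its current vertex. A vertex is explored when first visited; the strategy explores the graph when every vertex has been visited by some agent (agents need not return). With $k$ agents, agent $i$ traversing total distance $d_i$ (weights counted with multiplicity), the cost is $kq+\sum_i d_i$; a strategy is cost-optimal if it explores the graph with minimum cost (off-line setting). For the rooted tree: $c(v)$ is the set of children of $v$, $T_v$ the subtree of $v$ and its descendants, a leaf is a non-root vertex with no children, and $d(\cdot,\cdot)$ is weighted distance. *)

(* Defs.v *)
From mathcomp Require Import all_boot all_order all_algebra.
Set Implicit Arguments. Unset Strict Implicit. Unset Printing Implicit Defensive.
Import Order.TTheory GRing.Theory Num.Theory.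
Local Open Scope ring_scope.

(* A rooted weighted tree on a finite vertex type V is given by a root r,
   a parent function (parent r = r) and a weight function w : w x is the
   weight of the edge {x, parent x} for x <> r. *)
Section Tree.
Variables (R : realFieldType) (V : finType) (r : V) (parent : V -> V) (w : V -> R).

(* v is an ancestor of u (reflexive): u \in T_v *)
Definition anc (v u : V) : bool := [exists n : 'I_#|V|, iter n parent u == v].

Definition rooted_tree : Prop :=
  parent r = r /\ (forall x, anc r x) /\ (forall x, x != r -> 0 < w x).

Definition child (u v : V) : bool := (u != r) && (parent u == v).
Definition is_leaf (v : V) : bool := (v != r) && [forall u, ~~ child u v].

Fixpoint depth_aux (n : nat) (x : V) : R :=
  if n is n'.+1 then (if x == r then 0 else w x + depth_aux n' (parent x)) else 0.
Definition depth (x : V) : R := depth_aux #|V| x.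
(* d(v, u) for u a descendant of v *)
Definition dist_desc (v u : V) : R := depth u - depth v.

Definition adj (x y : V) : bool := child y x || child x y.
Definition ew (x y : V) : R := if child y x then w y else w x.

Inductive move := Invoke | Step of nat & V.

(* a trace records, for every invoked agent (in invocation order), the
   sequence of vertices it occupied *)
Definition step (tr : seq (seq V)) (m : move) : option (seq (seq V)) :=
  match m with
  | Invoke => Some (rcons tr [:: r])
  | Step i u =>
      if (i < size tr)%N && adj (last r (nth [::] tr i)) u
      then Some (set_nth [::] tr i (rcons (nth [::] tr i) u))
      else None
  end.

Fixpoint run (tr : seq (seq V)) (s : seq move) : option (seq (seq V)) :=
  match s with
  | [::] => Some tr
  | m :: s' => match step tr m with Some tr' => run tr' s' | None => None end
  end.

Definition path_len (t : seq V) : R :=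
  match t with [::] => 0 | x :: t' => \sum_(e <- pairmap ew x t') e end.

Definition cost (q : R) (tr : seq (seq V)) : R :=
  (size tr)%:R * q + \sum_(t <- tr) path_len t.

Definition covers (tr : seq (seq V)) : Prop :=
  forall x : V, exists2 t, t \in tr & x \in t.

Definition cost_optimal (q : R) (s : seq move) (tr : seq (seq V)) : Prop :=
  run [::] s = Some tr /\ covers tr /\
  forall s' tr', run [::] s' = Some tr' -> covers tr' -> cost q tr <= cost q tr'.

Definition agents_in (v : V) (tr : seq (seq V)) : nat :=
  count (fun t => has (anc v) t) tr.

(* Lk, Ll, Lc is a labeling produced by SetLabeling (any tie-breaking) *)
Definition is_labeling (q : R) (Lk : V -> nat) (Ll : V -> V) (Lc : V -> option V) : Prop :=
  (forall v, is_leaf v -> [/\ Lk v = 1%N, Ll v = v & Lc v = None]) /\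
  (forall v, ~~ is_leaf v ->
     Lk v = maxn 1 (\sum_(u | child u v)
              (Lk u - ((Lk u == 1%N) && (dist_desc v (Ll u) <= depth v + q)%R))%N)) /\
  (forall v, ~~ is_leaf v -> (exists u, child u v) ->
     exists2 u, Lc v = Some u &
       [/\ child u v, Ll v = Ll u &
           forall u', child u' v -> dist_desc v (Ll u') <= dist_desc v (Ll u)]).

End Tree.

(* Main.v *)
Require Import Defs.
From mathcomp Require Import all_boot all_order all_algebra.
From mathcomp Require Import lra zify.
Set Implicit Arguments. Unset Strict Implicit. Unset Printing Implicit Defensive.
Import Order.TTheory GRing.Theory Num.Theory.
Local Open Scope ring_scope.

Section Main.
Variables (R : realFieldType) (V : finType) (r : V) (parent : V -> V) (w : V -> R).
Hypothesis Hpr : parent r = r.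
Hypothesis Hroot : forall x, anc parent r x.
Hypothesis Hw : forall x, x != r -> 0 < w x.

Local Notation D u x := (exists n, iter n parent x = u).
Local Notation ch := (child r parent).
Local Notation adjv := (adj r parent).
Local Notation ewv := (ew r parent w).
Local Notation dep := (depth r parent w).
Local Notation plen := (path_len r parent w).

Lemma iter_r n : iter n parent r = r.
Proof. by elim: n => //= n ->. Qed.

Lemma reach x : exists2 m, (m < #|V|)%N & iter m parent x = r.
Proof. by have /existsP[m /eqP Hm] := Hroot x; exists (val m) => //; exact: ltn_ord. Qed.

Lemma ancP u x : anc parent u x <-> D u x.
Proof.
split; first by rewrite /anc => /existsP[m /eqP Hm]; exists (val m).
move=> [n Hn]; apply/existsP.
have [m Hm Hx] := reach x.
case: (ltnP n #|V|) => Hn'.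
  by exists (Ordinal Hn'); apply/eqP.
have Hu : u = r.
  rewrite -Hn -(subnK (ltnW (leq_trans Hm Hn'))) iterD Hx iter_r //.
by exists (Ordinal Hm); rewrite Hx Hu.
Qed.

Lemma iter_mul x k : iter k parent x = x -> forall j, iter (j * k) parent x = x.
Proof. by move=> Hk; elim=> [|j IH] //; rewrite mulSn iterD IH Hk. Qed.

Lemma nocycle x k : iter k.+1 parent x = x -> x = r.
Proof.
move=> Hk; have [m _ Hm] := reach x.
have := iter_mul Hk m.
have Hle : (m <= m * k.+1)%N by rewrite leq_pmulr.
by rewrite -(subnK Hle) iterD Hm iter_r => <-.
Qed.

Lemma desc_refl u : D u u.
Proof. by exists 0%N. Qed.

Lemma desc_trans a b c : D a b -> D b c -> D a c.
Proof. by move=> [n Hn] [m Hm]; exists (n + m)%N; rewrite iterD Hm. Qed.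

Lemma desc_parent u x : D u x -> x != u -> D u (parent x).
Proof.
move=> [[|n] Hn] Hx; first by rewrite -Hn eqxx in Hx.
by exists n; rewrite -iterSr.
Qed.

Lemma child_desc c a : ch c a -> D a c.
Proof. by move=> /andP[_ /eqP H]; exists 1%N. Qed.

Lemma not_desc_parent c : c != r -> ~ D c (parent c).
Proof.
move=> Hc [n Hn]; have : iter n.+1 parent c = c by rewrite iterSr.
by move/nocycle => E; rewrite E eqxx in Hc.
Qed.

Lemma adj_out u x y : adjv x y -> D u y -> ~ D u x -> x = parent u /\ y = u.
Proof.
move=> /orP[/andP[Hy /eqP Hp]|/andP[Hx /eqP Hp]] [n Hn] Hnx.
  case: n Hn => [|n] Hn; first by rewrite /= in Hn; subst.
  by exfalso; apply: Hnx; exists n; rewrite -Hp -iterSr.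
by exfalso; apply: Hnx; exists n.+1; rewrite iterSr Hp.
Qed.

Lemma adj_irrefl x : ~~ adjv x x.
Proof.
apply/negP => /orP[] /andP[Hx /eqP Hp];
 by have := @nocycle x 0 Hp => E; rewrite E eqxx in Hx.
Qed.

Lemma child_not_rev c a : ch c a -> ~~ ch a c.
Proof.
move=> /andP[Hc /eqP Hp]; apply/negP => /andP[Ha /eqP Hq].
have : iter 2 parent c = c by rewrite /= Hp Hq.
by move/nocycle => E; rewrite E eqxx in Hc.
Qed.

Lemma ew_child c a : ch c a -> ewv a c = w c /\ ewv c a = w c.
Proof.
move=> H; rewrite /ew H; split => //.
by rewrite (negbTE (child_not_rev H)).
Qed.

Lemma depth_auxE n x : iter n parent x = r -> forall m, (n <= m)%N ->
  depth_aux r parent w m x = depth_aux r parent w n x.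
Proof.
elim: n x => [|n IH] x Hx m Hm.
  by rewrite /= in Hx; subst; case: m {Hm} => //= m; rewrite eqxx.
case: m Hm => // m Hm /=; case: eqP => // _.
by rewrite (IH (parent x)) // -iterSr.
Qed.

Lemma depth_r : dep r = 0.
Proof.
rewrite /depth; have : (0 < #|V|)%N by (apply/card_gt0P; exists r).
case: #|V| => //= n _; by rewrite eqxx.
Qed.

Lemma depth_child c : c != r -> dep c = w c + dep (parent c).
Proof.
move=> Hc; have [m Hm Hx] := reach c.
rewrite /depth (depth_auxE Hx (ltnW Hm)).
case: m Hm Hx => [|m] Hm Hx; first by rewrite /= in Hx; rewrite Hx eqxx in Hc.
rewrite /= (negbTE Hc); congr (_ + _).
rewrite iterSr in Hx; have Hle : (m <= #|V|)%N by do 2 apply: ltnW.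
by rewrite /depth (depth_auxE Hx Hle).
Qed.

Lemma desc_unique w1 w2 u y : ch w1 u -> ch w2 u -> D w1 y -> D w2 y -> w1 = w2.
Proof.
move=> H1 H2 [a Ha] [b Hb].
wlog Hab : w1 w2 a b H1 H2 Ha Hb / (a <= b)%N.
  move=> Hw'; case: (leqP a b) => h; first exact: Hw' Ha Hb h.
  by apply/esym; apply: Hw' Hb Ha (ltnW h).
move: H1 H2 => /andP[Hw1 /eqP P1] /andP[Hw2 /eqP P2].
move: Hb; rewrite -(subnK Hab) iterD Ha.
case: (b - a)%N => [//|k].
rewrite iterSr P1 => Hk.
have : iter k.+1 parent u = u by rewrite /= Hk P2.
move/nocycle => Eu; rewrite Eu in Hk.
by rewrite iter_r in Hk; rewrite -Hk eqxx in Hw2.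
Qed.


Lemma adjC x y : adjv x y = adjv y x.
Proof. by rewrite /adj orbC. Qed.

Lemma plen_cat x s1 s2 : plen (x :: s1 ++ s2) = plen (x :: s1) + plen (last x s1 :: s2).
Proof. by rewrite /path_len pairmap_cat big_cat. Qed.

Lemma plen_cons x y s : plen (x :: y :: s) = ewv x y + plen (y :: s).
Proof. by rewrite /path_len /= big_cons. Qed.

Lemma split_first (T : eqType) (a : T) s : a \in s ->
  exists s1 s2, s = s1 ++ a :: s2 /\ a \notin s1.
Proof.
elim: s => // b s IH; rewrite inE; case: (eqVneq a b) => [<- _|Hab /= Hs].
  by exists [::], s.
have [s1 [s2 [-> Hn]]] := IH Hs.
by exists (b :: s1), s2; rewrite inE negb_or Hab Hn.
Qed.

Lemma child_of_adj a c : D a c -> adjv a c -> ch c a.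
Proof.
move=> Hd /orP[//|/andP[Ha /eqP Hp]].
by exfalso; apply: (not_desc_parent Ha); rewrite Hp.
Qed.

Lemma stay a c s y : ch c a -> D c y -> path adjv y s ->
  (forall z, z \in s -> D a z /\ z != a) -> forall z, z \in s -> D c z.
Proof.
move=> Hca; elim: s y => // z s IH y Hy /= /andP[Hyz Hp] Hs z'.
have Hz : D c z.
  case: (boolP (anc parent c z)) => [/ancP //|/negP Hn].
  rewrite adjC in Hyz; have [Hza _] := adj_out Hyz Hy (fun h => Hn (proj2 (ancP _ _) h)).
  move: Hca => /andP[_ /eqP Hp']; have [_ /negP] := Hs z (mem_head _ _).
  by rewrite Hza Hp' eqxx.
rewrite inE => /orP[/eqP -> //|Hz']; apply: (IH z Hz Hp _ z' Hz') => z0 H0.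
by apply: Hs; rewrite inE H0 orbT.
Qed.

Lemma dfs n : forall (a : V) (F : seq V), (size F <= n)%N -> path adjv a F ->
  last a F = a -> (forall y, y \in F -> D a y) -> forall x, x \in a :: F ->
  exists D', [/\ path adjv a D', last a D' = x, {subset a :: F <= a :: D'} &
     plen (a :: D') + (dep x - dep a) <= plen (a :: F)].
Proof.
elim: n => [|n IH] a F Hs Hp Hl Hin x Hx.
  case: F Hs Hp Hl Hin Hx => // _ _ _ _; rewrite inE => /eqP ->.
  by exists [::]; split => //; rewrite subrr addr0.
case: (eqVneq x a) => [->|Hxa].
  by exists F; split => //; rewrite subrr addr0.
case: F Hs Hp Hl Hin Hx => [|c F'] Hs Hp Hl Hin Hx.
  by move: Hx; rewrite inE (negbTE Hxa).
rewrite /= in Hp; move/andP: Hp => [Hac Hp].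
have Hca : ch c a by apply: child_of_adj => //; apply: Hin; rewrite inE eqxx.
have Ha : a \in F'.
  move: (mem_last c F'); rewrite /= in Hl; rewrite Hl inE => /orP[/eqP Eac|//].
  by move: (adj_irrefl a); rewrite {2}Eac Hac.
have [F1' [G [EF Hn]]] := split_first Ha.
have Hcna : c != a by apply/eqP => E; move: (adj_irrefl a); rewrite -{2}E Hac.
have HF1 : a \notin c :: F1' by rewrite inE negb_or eq_sym Hcna.
subst F'.
rewrite cat_path /= in Hp; move/andP: Hp => [Hp1 /andP[Hla Hp2]].
have Hl2 : last a G = a by move: Hl; rewrite /= last_cat.
have HinF1 : forall z, z \in c :: F1' -> D c z.
  move=> z Hz; case/orP: (Hz) => [/eqP -> |Hz']; first exact: desc_refl.
  apply: (@stay a c F1' c Hca (desc_refl c) Hp1) => // z0 H0.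
  split; first by apply: Hin; rewrite inE mem_cat H0 orbT.
  by apply/eqP => E; move: Hn; rewrite -E H0.
have Hlc : last c F1' = c.
  have Hm := HinF1 _ (mem_last c F1').
  have Hna : ~ D c a.
    move: Hca => /andP[Hc /eqP Hp']; rewrite -Hp'; exact: not_desc_parent.
  by rewrite adjC in Hla; have [] := adj_out Hla Hm Hna.
have Hdc : dep c = w c + dep a.
  move: Hca => /andP[Hc /eqP Hp']; by rewrite depth_child // Hp'.
have [Eac Eca] := ew_child Hca.
have Hlen : plen (a :: c :: F1' ++ a :: G) =
    w c + plen (c :: F1') + w c + plen (a :: G).
  by rewrite plen_cons plen_cat Hlc plen_cons Eac Eca !addrA.
rewrite Hlen.
case: (boolP (x \in c :: F1')) => HxF.
  have HsF1 : (size F1' <= n)%N by move: Hs; rewrite /= size_cat /=; lia.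
  have HiF1 : forall y, y \in F1' -> D c y by move=> y Hy; apply: HinF1; rewrite inE Hy orbT.
  have [D1 [P1 L1 S1 Le1]] := IH c F1' HsF1 Hp1 Hlc HiF1 x HxF.
  exists (G ++ c :: D1); split.
  - by rewrite cat_path Hp2 /= Hl2 Hac P1.
  - by rewrite last_cat Hl2.
  - move=> y Hy; case: (boolP (y \in c :: F1')) => Hy1.
      by have := S1 y Hy1; rewrite !(inE, mem_cat) => ->; rewrite !orbT.
    move: Hy Hy1; rewrite !(inE, mem_cat).
    by case: (y == a); case: (y == c); case: (y \in F1'); case: (y \in G).
  - rewrite plen_cat Hl2 plen_cons Eac; lra.
have HxG : x \in a :: G.
  move: Hx HxF; rewrite !(inE, mem_cat) (negbTE Hxa).
  by case: (x == c); case: (x \in F1'); case: (x \in G).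
have HsG : (size G <= n)%N by move: Hs; rewrite /= size_cat /=; lia.
have HiG : forall y, y \in G -> D a y.
  by move=> y Hy; apply: Hin; rewrite !(inE, mem_cat) Hy !orbT.
have [D2 [P2 L2 S2 Le2]] := IH a G HsG Hp2 Hl2 HiG x HxG.
exists (c :: F1' ++ a :: D2); split.
- by rewrite /= Hac cat_path Hp1 /= Hlc adjC Hac.
- by rewrite /= last_cat Hlc.
- move=> y Hy; case: (boolP (y \in a :: G)) => Hy1.
    have := S2 y Hy1; rewrite !(inE, mem_cat); case/orP=> ->; by rewrite !orbT.
  move: Hy Hy1; rewrite !(inE, mem_cat).
  by case: (y == a); case: (y == c); case: (y \in F1'); case: (y \in G).
- rewrite plen_cons plen_cat Hlc plen_cons Eac Eca; lra.
Qed.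

Definition good (t : seq V) : bool :=
  if t is x :: t' then (x == r) && path adjv r t' else false.

Lemma all_set_nth (T : eqType) (P : pred T) (s : seq T) x0 i y :
  all P s -> P y -> (i < size s)%N -> all P (set_nth x0 s i y).
Proof.
move=> /allP Hs Py Hi; apply/allP => z; rewrite set_nthE Hi mem_cat inE.
by case/or3P => [/mem_take/Hs|/eqP->|/mem_drop/Hs].
Qed.

Lemma step_good tr m tr' : step r parent tr m = Some tr' -> all good tr -> all good tr'.
Proof.
case: m => [|i u] /=.
  by move=> [<-] H; rewrite all_rcons /= eqxx H.
case: ifP => // /andP[Hi Ha] [<-] H.
apply: all_set_nth => //.
have := allP H (nth [::] tr i) (mem_nth _ Hi).
case: (nth [::] tr i) Ha => // x t' Ha /andP[/eqP Ex Hp].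
by rewrite /= Ex eqxx rcons_path Hp -Ex /=; rewrite Ex in Ha *.
Qed.

Lemma run_good s tr0 tr : run r parent tr0 s = Some tr -> all good tr0 -> all good tr.
Proof.
elim: s tr0 => [|m s IH] tr0 /=; first by move=> [<-].
case E: (step r parent tr0 m) => [tr1|] // H H0.
exact: IH H (step_good E H0).
Qed.

Lemma run_cat tr0 s1 s2 : run r parent tr0 (s1 ++ s2) =
  if run r parent tr0 s1 is Some tr1 then run r parent tr1 s2 else None.
Proof.
elim: s1 tr0 => [|m s1 IH] tr0 //=.
by case: (step r parent tr0 m) => // tr1; rewrite IH.
Qed.

Lemma run_steps t' a tr0 : path adjv (last r a) t' ->
  run r parent (rcons tr0 a) [seq Step (size tr0) u | u <- t'] = Some (rcons tr0 (a ++ t')).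
Proof.
elim: t' a => [|u t' IH] a /=; first by rewrite cats0.
move=> /andP[Ha Hp].
rewrite size_rcons leqnn nth_rcons ltnn eqxx Ha /=.
have -> : set_nth [::] (rcons tr0 a) (size tr0) (rcons a u) = rcons tr0 (rcons a u).
  rewrite set_nthE size_rcons ltnSn -cats1 take_cat drop_cat ltnn ltnNge leqnSn /= subnn subSnn /=.
  by rewrite cats0 cats1.
by rewrite IH ?cat_rcons // last_rcons.
Qed.

Lemma realize tr tr0 : all good tr -> exists s, run r parent tr0 s = Some (tr0 ++ tr).
Proof.
elim: tr tr0 => [|t tr IH] tr0 /=; first by exists [::]; rewrite cats0.
case: t => // x t' /andP[/andP[/eqP -> Hp] Ha].
have [s2 Hs2] := IH (rcons tr0 (r :: t')) Ha.
exists ((Invoke _ :: [seq Step (size tr0) u | u <- t']) ++ s2).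
rewrite run_cat /= (run_steps (a := [:: r])) //.
by rewrite Hs2 cat_rcons.
Qed.

Lemma plen_pair a b : plen [:: a; b] = ewv a b.
Proof. by rewrite plen_cons /path_len /= big_nil addr0. Qed.

Lemma path_to x : exists p, [/\ path adjv r p, last r p = x & plen (r :: p) = dep x].
Proof.
have [m _ Hm] := reach x.
elim: m x Hm => [|m IH] x Hm.
  by rewrite /= in Hm; exists [::]; rewrite Hm depth_r /path_len /= big_nil.
case: (eqVneq x r) => [->|Hx].
  by exists [::]; rewrite depth_r /path_len /= big_nil.
rewrite iterSr in Hm; have [p [P1 P2 P3]] := IH _ Hm.
have Hc : ch x (parent x) by rewrite /child Hx eqxx.
exists (rcons p x); split.
- by rewrite rcons_path P1 P2 /adj Hc.
- by rewrite last_rcons.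
- rewrite -cats1 plen_cat P2 plen_pair P3 (depth_child Hx).
  by have [E1 _] := ew_child Hc; rewrite E1 addrC.
Qed.

Lemma split_suffix (P : pred V) x0 s : ~~ P x0 ->
  exists s1 s2, [/\ s = s1 ++ s2, all P s2 & ~~ P (last x0 s1)].
Proof.
move=> H0; elim/last_ind: s => [|s y [s1 [s2 [-> H1 H2]]]]; first by exists [::], [::].
case: (boolP (P y)) => Hy.
  by exists s1, (rcons s2 y); rewrite rcons_cat all_rcons Hy H1.
by exists (rcons (s1 ++ s2) y), [::]; rewrite cats0 last_rcons.
Qed.

Lemma split_prefix (P : pred V) s :
  exists s1 s2, [/\ s = s1 ++ s2, all P s1 &
     (s2 = [::] \/ exists b s2', s2 = b :: s2' /\ ~~ P b)].
Proof.
elim: s => [|y s [s1 [s2 [-> H1 H2]]]]; first by exists [::], [::]; split => //; left.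
case: (boolP (P y)) => Hy.
  by exists (y :: s1), s2; rewrite /= Hy H1.
by exists [::], (y :: s1 ++ s2); split => //; right; exists y, (s1 ++ s2).
Qed.

Lemma cost_split q tr1 t tr2 :
  cost r parent w q (tr1 ++ t :: tr2) = cost r parent w q (tr1 ++ tr2) + q + plen t.
Proof.
rewrite /cost !size_cat !big_cat /= big_cons addnS -addn1 natrD mulrDl mul1r.
lra.
Qed.

Lemma exch q s tr u l : cost_optimal r parent w q s tr -> u != r -> D u l ->
  dep (parent u) + q < dep l - dep (parent u) ->
  has (fun t => anc parent u (last r t)) tr.
Proof.
move=> [Hrun [Hcov Hopt]] Hu Hl Hlt.
case: (boolP (has _ tr)) => // /hasPn Hno; exfalso.
have Hg := run_good Hrun (erefl _).
have [t Ht Hlin] := Hcov l.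
have gt := allP Hg t Ht.
have [tr1 [tr2 [Etr _]]] := split_first Ht.
case: t Ht Hlin gt Etr => // x t' Ht Hlin /andP[/eqP Ex Hp] Etr.
rewrite Ex in Ht Hlin Etr; clear x Ex.
have HrT : ~~ anc parent u r.
  by apply/negP => /ancP [n Hn]; rewrite iter_r in Hn; rewrite Hn eqxx in Hu.
have HuT : anc parent u l by apply/ancP.
have Hlt' : l \in t'.
  move: Hlin; rewrite inE => /orP[/eqP E|//]; by move: HrT; rewrite -E HuT.
have [X [Y [Et' _]]] := split_first Hlt'.
have [A' [F1 [EX HF1 HA]]] := split_suffix X HrT.
have [F2 [Bs [EY HF2 HB]]] := split_prefix (anc parent u) Y.
case: HB => [EB|[b [B' [EB Hb]]]].
  have := Hno _ Ht; rewrite /= Et' EX EY EB cats0 last_cat /=.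
  have := mem_last l F2; rewrite inE => /orP[/eqP->|H]; first by rewrite HuT.
  by rewrite (allP HF2 _ H).
have Et'2 : t' = A' ++ (F1 ++ l :: F2) ++ b :: B'.
  by rewrite Et' EX EY EB -!catA.
have HF : all (anc parent u) (F1 ++ l :: F2) by rewrite all_cat HF1 /= HuT HF2.
have HlF : l \in F1 ++ l :: F2 by rewrite mem_cat mem_head orbT.
move: HF HlF Et'2; case: (F1 ++ l :: F2) => [//|f0 F'] HF HlF Et'2.
rewrite Et'2 cat_path /= cat_path /= in Hp.
move/and5P: Hp => [HpA Ha0 HpF Hab HpB].
have notD y : ~~ anc parent u y -> ~ D u y by move=> /negP H /ancP.
have [Ev Ef] := adj_out Ha0 (proj1 (ancP _ _) (allP HF _ (mem_head _ _))) (notD _ HA).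
rewrite adjC in Hab.
have [Eb El] := adj_out Hab (proj1 (ancP _ _) (allP HF _ (mem_last _ _))) (notD _ Hb).
rewrite Ef in HF HlF Et'2 HpF El; clear Ef Ha0.
set v := parent u in Ev Eb Hlt.
have Hch : ch u v by rewrite /child Hu eqxx.
have [Evu Euv] := ew_child Hch.
have HiF : forall y, y \in F' -> D u y.
  by move=> y Hy; apply/ancP; apply: (allP HF); rewrite inE Hy orbT.
have [D' [PD LD SD LeD]] := dfs (leqnn (size F')) HpF El HiF HlF.
have [p [Pp Lp Lenp]] := path_to v.
set tnew := r :: A' ++ B'.
set tB := r :: p ++ u :: D'.
have gnew : good tnew by rewrite /= eqxx cat_path HpA Ev -Eb HpB.
have gB : good tB by rewrite /= eqxx cat_path Pp Lp /= /adj Hch PD.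
set tr' := tr1 ++ tnew :: tr2 ++ [:: tB].
have Hg' : all good tr'.
  apply/allP => t0; rewrite /tr' !(mem_cat, inE) => /or4P[H|/eqP->|H|/eqP->] //;
  by apply: (allP Hg); rewrite Etr mem_cat inE H ?orbT.
have [s' Hs'] := realize [::] Hg'.
have Hcov' : covers tr'.
  move=> z; have [t0 Ht0 Hz] := Hcov z.
  move: Ht0; rewrite Etr mem_cat inE => /or3P[H|/eqP E|H].
  - by exists t0 => //; rewrite /tr' mem_cat H.
  - rewrite E Et'2 in Hz.
    case: (boolP (z \in u :: F')) => Hz1.
      exists tB; first by rewrite /tr' !(mem_cat, inE) eqxx !orbT.
      by have := SD z Hz1; rewrite /tB !(inE, mem_cat) => ->; rewrite !orbT.
    exists tnew; first by rewrite /tr' mem_cat inE eqxx orbT.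
    have Hv : v \in tnew by rewrite -Ev /tnew -cat_cons mem_cat mem_last.
    move: Hz Hz1 Hv; rewrite /tnew -Eb !(inE, mem_cat).
    case: (eqVneq z b) => [-> _ _ //|_]. by case: (z == r); case: (z \in A'); case: (z \in B'); case: (z == u); case: (z \in F').
  - by exists t0 => //; rewrite /tr' !(mem_cat, inE) H !orbT.
have := Hopt s' tr' Hs' Hcov'.
rewrite Etr /tr' (cost_split q tr1 (r :: t') tr2) (cost_split q tr1 tnew (tr2 ++ [:: tB])).
rewrite catA (cost_split q (tr1 ++ tr2) tB [::]) cats0.
rewrite Et'2 /tnew /tB Eb.
rewrite (plen_cat r A') (plen_cat r A') (plen_cat r p) Ev Lp Lenp.
have Elv : last v (u :: F') = u by exact: El.
rewrite -cat_cons (plen_cat v (u :: F')) Elv.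
rewrite !plen_cons Evu Euv.
have Hdu : dep u = w u + dep v by rewrite depth_child.
move: LeD; rewrite Hdu => LeD.
lra.
Qed.

Lemma sum_anc_le u y : (\sum_(c | ch c u) anc parent c y <= anc parent u y)%N.
Proof.
case: (pickP (fun c => ch c u && anc parent c y)) => [c0 /andP[H1 H2]|H0].
  rewrite (bigD1 c0) //= H2 big1 ?addn0 //.
    suff -> : anc parent u y by [].
    by apply/ancP; apply: desc_trans (child_desc H1) (proj1 (ancP _ _) H2).
  move=> c /andP[Hc Hne]; case: (boolP (anc parent c y)) => // Hcy.
  have E := desc_unique Hc H1 (proj1 (ancP _ _) Hcy) (proj1 (ancP _ _) H2).
  by rewrite E eqxx in Hne.
rewrite big1 // => c Hc; have := H0 c; rewrite Hc /=; by case: (anc parent c y).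
Qed.

Definition term u (tr : seq (seq V)) := count (fun t => anc parent u (last r t)) tr.

Lemma sum_count u tr : (\sum_(c | ch c u) term c tr <= term u tr)%N.
Proof.
elim: tr => [|t tr IH]; first by rewrite big1.
rewrite /term /= big_split /=; exact: leq_add (sum_anc_le u (last r t)) IH.
Qed.

Lemma term_le_agents v tr : all good tr -> (term v tr <= agents_in parent v tr)%N.
Proof.
elim: tr => [//|t tr IH] /= /andP[Ht Htr].
apply: leq_add (IH Htr).
case: t Ht => // x t' _.
case: (boolP (anc parent v (last r (x :: t')))) => // H.
rewrite lt0b; apply/hasP; exists (last r (x :: t')) => //; exact: (mem_last x t').
Qed.

Definition S u := [set x | anc parent u x].

Lemma card_child c u : ch c u -> (#|S c| < #|S u|)%N.
Proof.
move=> Hc; apply: proper_card; apply/properP; split.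
  apply/subsetP => x; rewrite !inE => /ancP H; apply/ancP.
  exact: desc_trans (child_desc Hc) H.
exists u; first by rewrite inE; apply/ancP; exact: desc_refl.
move: Hc => /andP[Hc /eqP Hp]; rewrite inE; apply/negP => /ancP.
by rewrite -Hp; apply: not_desc_parent.
Qed.

Lemma S_gt0 u : (0 < #|S u|)%N.
Proof. by apply/card_gt0P; exists u; rewrite inE; apply/ancP; exact: desc_refl. Qed.

Lemma nonleaf_child u : u != r -> ~~ is_leaf r parent u -> exists c, ch c u.
Proof.
move=> Hu; rewrite /is_leaf Hu /= negb_forall => /existsP[c]; rewrite negbK => H.
by exists c.
Qed.

Variables (q : R) (Lk : V -> nat) (Ll : V -> V) (Lc : V -> option V).
Hypothesis Hlab : is_labeling r parent w q Lk Ll Lc.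

Lemma LlP n u : (#|S u| <= n)%N -> u != r -> D u (Ll u).
Proof.
have [HL1 [HL2 HL3]] := Hlab.
elim: n u => [|n IH] u Hn Hu; first by move: (S_gt0 u); rewrite leqn0 in Hn; rewrite (eqP Hn).
case: (boolP (is_leaf r parent u)) => Hl.
  by have [_ -> _] := HL1 u Hl; exact: desc_refl.
have [c0 Hc0] := nonleaf_child Hu Hl.
have [c Hc [Hcu -> _]] := HL3 u Hl (ex_intro _ c0 Hc0).
apply: desc_trans (child_desc Hcu) _.
apply: IH; last by case/andP: Hcu.
by rewrite -ltnS; apply: leq_trans (card_child Hcu) Hn.
Qed.

Definition contrib u := (Lk u - ((Lk u == 1%N) &&
   (dist_desc r parent w (parent u) (Ll u) <= dep (parent u) + q)%R))%N.

Lemma nonleaf_bound tr u : ~~ is_leaf r parent u ->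
  (forall c, ch c u -> (contrib c <= term c tr)%N) -> (Lk u <= maxn 1 (term u tr))%N.
Proof.
have [HL1 [HL2 HL3]] := Hlab.
move=> Hl Hc; rewrite (HL2 u Hl).
have : (\sum_(c | ch c u) (Lk c - ((Lk c == 1%N) && (dist_desc r parent w u (Ll c) <= dep u + q)%R))
         <= term u tr)%N.
  apply: leq_trans (sum_count u tr); apply: leq_sum => c Hcu.
  by have := Hc c Hcu; rewrite /contrib; case/andP: Hcu => _ /eqP ->.
move=> H; rewrite geq_max leq_maxl /=; exact: leq_trans H (leq_maxr _ _).
Qed.

Lemma main_ind s tr n u : cost_optimal r parent w q s tr ->
  (#|S u| <= n)%N -> u != r -> (contrib u <= term u tr)%N.
Proof.
have [HL1 [HL2 HL3]] := Hlab.
move=> Hopt; elim: n u => [|n IH] u Hn Hu; first by move: (S_gt0 u); rewrite leqn0 in Hn; rewrite (eqP Hn).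
rewrite /contrib; case: (eqVneq (Lk u) 1%N) => HL /=.
  case: (boolP (dist_desc _ _ _ _ _ <= _)) => Hd; first by rewrite subn1 HL.
  rewrite HL subn0 /term -has_count.
  apply: (exch Hopt Hu (LlP (leqnn _) Hu)).
  by move: Hd; rewrite /dist_desc -ltNge.
rewrite subn0.
case: (boolP (is_leaf r parent u)) => Hl.
  by have [E _ _] := HL1 u Hl; rewrite E in HL.
have Hb : forall c, ch c u -> (contrib c <= term c tr)%N.
  move=> c Hcu; apply: IH; last by case/andP: Hcu.
  by rewrite -ltnS; apply: leq_trans (card_child Hcu) Hn.
have := nonleaf_bound Hl Hb.
move: HL; lia.
Qed.

Lemma final s tr v : cost_optimal r parent w q s tr -> (Lk v <= agents_in parent v tr)%N.
Proof.
have [HL1 [HL2 HL3]] := Hlab.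
move=> Hopt; have [Hrun [Hcov _]] := Hopt.
have Hg := run_good Hrun (erefl _).
have H1 : (0 < agents_in parent v tr)%N.
  have [t Ht Hv] := Hcov v; rewrite /agents_in -has_count; apply/hasP; exists t => //.
  by apply/hasP; exists v => //; apply/ancP; exact: desc_refl.
have Ht := term_le_agents v Hg.
case: (boolP (is_leaf r parent v)) => Hl.
  by have [E _ _] := HL1 v Hl; rewrite E.
have Hb : forall c, ch c v -> (contrib c <= term c tr)%N.
  by move=> c Hcu; apply: (main_ind Hopt (leqnn _)); case/andP: Hcu.
have := nonleaf_bound Hl Hb.
lia.
Qed.

End Main.

Theorem lemma3 (R : realFieldType) (V : finType) (r : V) (parent : V -> V) (w : V -> R)
    (q : R) (Lk : V -> nat) (Ll : V -> V) (Lc : V -> option V) :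
  rooted_tree r parent w ->
  (forall v, v != r -> #|[set u | child r parent u v]| != 1%N) ->
  0 <= q ->
  is_labeling r parent w q Lk Ll Lc ->
  forall (s : seq (move V)) (tr : seq (seq V)),
    cost_optimal r parent w q s tr ->
    forall v : V, (Lk v <= agents_in parent v tr)%N.
Proof.
move=> [Hpr [Hroot Hw]] _ _ Hlab s tr Hopt v.
exact: (final Hpr Hroot Hlab v Hopt).
Qed.
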